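(* Let $p_1,\dots,p_n\ge0$, unit vectors $\vec a_1,\dots,\vec a_n\in\mathbb{R}^3$ with $\sum_ip_i=2$, $\sum_ip_i\vec a_i=\vec0$, and let $A^{1/2}_i=\frac{p_i}{2}\big(\mathds{1}+\tfrac12\vec a_i\cdot\vec\sigma\big)$. Let $f(\vec x)=\sum_ip_i\Theta(\vec x\cdot\vec a_i)$ and suppose (in the given coordinates) $f(\vec v_{s_xs_ys_z})\le1$ for all $(s_x,s_y,s_z)\in\{\pm1\}^3$. Define $$\alpha_i=\frac{p_i}{2}\Big(1-\frac14\sum_{s_x,s_y,s_z=\pm1}\Theta(\vec a_i\cdot\vec v_{s_xs_ys_z})\Big),$$ and for $\vec\lambda\in S_2$ with $s_k=\mathrm{sgn}(\lambda_k)$, $$p(i|\vec\lambda)=p_i\,\Theta(\vec a_i\cdot\vec v_{s_xs_ys_z})+\frac{(1-f(\vec v_{s_xs_ys_z}))\,\alpha_i}{\sum_j\alpha_j}$$ (with the second term taken to be $0$ if $\sum_j\alpha_j=0$). Then $\alpha_i\ge0$ for all $i$, $p(i|\vec\lambda)\ge0$, $\sum_ip(i|\vec\lambda)=1$ for all $\vec\lambda$, and $$\int_{S_2}p(i|\vec\lambda)\,\frac{1}{4\pi}(\mathds{1}+\vec\lambda\cdot\vec\sigma)\,\mathrm{d}\vec\lambda=A^{1/2}_i\quad\text{for all } i.$$ Moreover, $\sum_{s_x,s_y,s_z=\pm1}p_i\,\Theta(\vec a_i\cdot\vec v_{s_xs_ys_z})\,G_{s_xs_ys_z}=A^{1/2}_i-\alpha_i\mathds{1}$,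 where $G_{s_xs_ys_z}=\frac{\mathds{1}}{8}+\frac{\vec v_{s_xs_ys_z}\cdot\vec\sigma}{16}$.
   Context: $\Theta(x)=x$ for $x\ge0$ and $0$ for $x<0$; $\mathrm{sgn}(x)=+1$ if $x\ge0$ and $-1$ if $x<0$; $\vec v_{s_xs_ys_z}=(s_x,s_y,s_z)^T$; $\vec\sigma$ the Pauli vector; $S_2$ the unit sphere in $\mathbb{R}^3$ with surface measure $\mathrm{d}\vec\lambda$ of total mass $4\pi$. *)

(* Defs.v *)
From HB Require Import structures.
From mathcomp Require Import all_boot all_order all_algebra.
From mathcomp Require Import all_classical all_reals all_analysis.
From mathcomp Require Import complex.
Set Implicit Arguments. Unset Strict Implicit. Unset Printing Implicit Defensive.
Import Order.TTheory GRing.Theory Num.Theory.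
Local Open Scope ring_scope.
Local Open Scope classical_set_scope.

Section Defs.
Variable R : realType.

Definition vec3 := 'rV[R]_3.
Definition dot3 (u v : vec3) : R := \sum_(k < 3) u 0 k * v 0 k.

Definition Theta (x : R) : R := if 0 <= x then x else 0.
Definition sgn (x : R) : R := if 0 <= x then 1 else -1.

(* Sign patterns (s_x,s_y,s_z) in {+-1}^3, encoded by booleans (true = +1). *)
Definition signs := {ffun 'I_3 -> bool}.
Definition vsgn (s : signs) : vec3 := \row_k (if s k then 1 else -1).
Definition vlam (lam : vec3) : vec3 := \row_k sgn (lam 0 k).

Definition C := R[i].
Definition toC (x : R) : C := (x%:C)%C.
Definition iC : C := ('i)%C.
Definition mat2 := 'M[C]_2.
Definition sigma_x : mat2 := \matrix_(r < 2, c < 2) (if r == c then 0 else 1).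
Definition sigma_y : mat2 :=
  \matrix_(r < 2, c < 2)
    (if r == c then 0 else if (r : nat) == 0%N then - iC else iC).
Definition sigma_z : mat2 :=
  \matrix_(r < 2, c < 2)
    (if r == c then (if (r : nat) == 0%N then 1 else -1) else 0).
Definition pauli (k : 'I_3) : mat2 :=
  if (k : nat) == 0%N then sigma_x else if (k : nat) == 1%N then sigma_y
  else sigma_z.
Definition dotsigma (v : vec3) : mat2 := \sum_(k < 3) toC (v 0 k) *: pauli k.
Definition I2 : mat2 := 1%:M.

(* Spherical parametrisation of S_2 and the surface integral w.r.t. the
   standard surface measure (total mass 4 pi). *)
Definition sph (th ph : R) : vec3 :=
  \row_k (if (k : nat) == 0%N then sin th * cos ph
          else if (k : nat) == 1%N then sin th * sin ph else cos th).
Definition sphere_int (g : vec3 -> R) : R :=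
  Rintegral (@lebesgue_measure R) `[0, pi]%classic
    (fun th => Rintegral (@lebesgue_measure R) `[0, 2 * pi]%classic
       (fun ph => g (sph th ph) * sin th)).
Definition sphere_int_mx (F : vec3 -> mat2) : mat2 :=
  \matrix_(r < 2, c < 2)
    (toC (sphere_int (fun l => complex.Re (F l r c)))
     + iC * toC (sphere_int (fun l => complex.Im (F l r c)))).

Variables (n : nat) (p : 'I_n -> R) (a : 'I_n -> vec3).

Definition Ahalf (i : 'I_n) : mat2 :=
  toC (p i / 2) *: (I2 + toC (1 / 2) *: dotsigma (a i)).
Definition fPOVM (x : vec3) : R := \sum_(i < n) p i * Theta (dot3 x (a i)).
Definition alpha (i : 'I_n) : R :=
  p i / 2 * (1 - 1 / 4 * \sum_(s : signs) Theta (dot3 (a i) (vsgn s))).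
Definition pcond (i : 'I_n) (lam : vec3) : R :=
  p i * Theta (dot3 (a i) (vlam lam)) +
  (if \sum_(j < n) alpha j == 0 then 0
   else (1 - fPOVM (vlam lam)) * alpha i / \sum_(j < n) alpha j).
Definition Gs (s : signs) : mat2 :=
  toC (1 / 8) *: I2 + toC (1 / 16) *: dotsigma (vsgn s).

End Defs.

(* Main.v *)
Require Import Defs.
From HB Require Import structures.
From mathcomp Require Import all_boot all_order all_algebra.
From mathcomp Require Import all_classical all_reals all_analysis.
From mathcomp Require Import complex.
From mathcomp Require Import measurable_realfun.
From mathcomp Require Import ring lra.
Import Order.TTheory GRing.Theory Num.Theory.
Import numFieldNormedType.Exports.
Set Implicit Arguments. Unset Strict Implicit. Unset Printing Implicit Defensive.
Local Open Scope classical_set_scope.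
Local Open Scope ring_scope.

Section S.
Variable R : realType.
Local Notation mu := (@lebesgue_measure R).

Lemma ftc_all (F f : R -> R) (a b : R) : a <= b ->
  (forall x : R, is_derive x (1:R) F (f x)) -> continuous f ->
  (\int[mu]_(x in `[a, b]) (f x)%:E = (F b - F a)%:E)%E.
Proof.
move=> ab dF cf; case: (eqVneq a b) => [<-|nab].
  by rewrite set_itv1 integral_set1 subrr.
have {nab} ab' : a < b by rewrite lt_neqAle nab.
rewrite EFinB (@continuous_FTC2 _ f F _ _ ab' (continuous_subspaceT cf))//.
- split.
  + by move=> x _; case: (dF x).
  + have : continuous F.
      by move=> x; apply/differentiable_continuous/derivable1_diffP; case: (dF x).
    move=> cF; apply: cvg_within_filter; exact: cF.
  + have : continuous F.
      by move=> x; apply/differentiable_continuous/derivable1_diffP; case: (dF x).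
    move=> cF; apply: cvg_within_filter; exact: cF.
- by move=> x _; rewrite derive1E; case: (dF x).
Qed.

Lemma mpiece (f g : R -> R) (a b : R) : {in `]a, b[, f =1 g} -> continuous g ->
  measurable_fun `]a, b[ (EFin \o f).
Proof.
move=> fg cg; apply/measurable_EFinP.
apply: (@eq_measurable_fun _ _ _ _ _ g f).
- by move=> x /set_mem/= xab; rewrite fg.
- by apply: measurable_funTS; exact: continuous_measurable_fun.
Qed.

Lemma piece (f g G : R -> R) (a b : R) (b0 b1 : bool) : a <= b ->
  (forall x : R, is_derive x (1:R) G (g x)) -> continuous g ->
  {in `]a, b[, f =1 g} ->
  (\int[mu]_(x in [set` Interval (BSide b0 a) (BSide b1 b)]) (f x)%:E
    = (G b - G a)%:E)%E.
Proof.
move=> ab dG cg fg.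
rewrite integral_itv_bndoo; last exact: mpiece fg cg.
transitivity (\int[mu]_(x in `]a, b[) (g x)%:E)%E.
  by apply: eq_integral => x /set_mem/= xab; rewrite fg.
rewrite -(@integral_itv_bndoo _ a b (fun x => (g x)%:E) true false); last first.
  by apply: (@mpiece g g).
exact: ftc_all.
Qed.


Lemma meas_oc (f : R -> R) (a b : R) :
  measurable_fun `]a, b[ (EFin \o f) -> measurable_fun `[a, b] (EFin \o f).
Proof.
move=> m1.
apply: (@measurable_funS _ _ _ _ (`]a, b[ `|` ([set a] `|` [set b]))).
- by apply: measurableU => //; apply: measurableU.
- move=> x /=; rewrite in_itv/= => /andP[ax xb].
  have [xa|xa] := eqVneq x a; first by right; left.
  have [xb'|xb'] := eqVneq x b; first by right; right.
  left; rewrite /= in_itv/=; apply/andP; split.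
    by rewrite lt_neqAle eq_sym xa ax.
  by rewrite lt_neqAle xb' xb.
- apply/measurable_funU => //; first by apply: measurableU.
  split => //.
  by apply/measurable_funU => //; split; exact: measurable_fun_set1.
Qed.

Lemma meas_join (f : R -> R) (a b c : R) :
  measurable_fun `[a, b] (EFin \o f) -> measurable_fun `[b, c] (EFin \o f) ->
  measurable_fun `[a, c] (EFin \o f).
Proof.
move=> m1 m2.
apply: (@measurable_funS _ _ _ _ (`[a, b] `|` `[b, c])).
- by apply: measurableU.
- move=> x /=; rewrite in_itv/= => /andP[ax xc].
  have [xb|xb] := leP x b.
    by left; rewrite /= in_itv/= ax xb.
  by right; rewrite /= in_itv/= xc (ltW xb).
- by apply/measurable_funU.
Qed.

Lemma meas_sub (f : R -> R) (a b a' b' : R) : a <= a' -> b' <= b ->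
  measurable_fun `[a, b] (EFin \o f) -> measurable_fun `[a', b'] (EFin \o f).
Proof.
move=> aa bb m; apply: (measurable_funS _ _ m) => // x /=.
rewrite !in_itv/= => /andP[ax xb].
by rewrite (le_trans aa ax) (le_trans xb bb).
Qed.

Lemma split_int (f : R -> R) (b0 : bool) (a b c : R) : a <= b -> b <= c ->
  measurable_fun `[a, c] (EFin \o f) ->
  (\int[mu]_(x in [set` Interval (BSide b0 a) (BRight c)]) (f x)%:E =
   \int[mu]_(x in [set` Interval (BSide b0 a) (BRight b)]) (f x)%:E
   + \int[mu]_(x in `]b, c]) (f x)%:E)%E.
Proof.
move=> ab bc mac.
have h1 : (BSide b0 a <= BRight b)%O by case: b0; rewrite bnd_simp.
have h2 : (BRight b <= BRight c)%O by rewrite bnd_simp.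
rewrite (@itv_bndbnd_setU _ _ (BSide b0 a) (BRight b) (BRight c) h1 h2).
rewrite integral_setU//=.
- rewrite -itv_bndbnd_setU//.
  apply: (measurable_funS _ _ mac) => // x /=; rewrite !in_itv/=.
  by clear h1; case: b0 => /= /andP[ax ->]; rewrite ?andbT// ltW.
- apply/disj_setPS => y [/=]; rewrite 2!in_itv/= => /andP[_ yb] /andP[hby _].
  by move: (lt_le_trans hby yb); rewrite ltxx.
Qed.

Lemma inner_piece (f : R -> R) (c0 c1 c2 a b : R) (b0 b1 : bool) : a <= b ->
  {in `]a, b[, forall x, f x = c0 + c1 * cos x + c2 * sin x} ->
  measurable_fun `]a, b[ (EFin \o f) /\
  (\int[mu]_(x in [set` Interval (BSide b0 a) (BSide b1 b)]) (f x)%:E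
    = (c0 * (b - a) + c1 * (sin b - sin a) - c2 * (cos b - cos a))%:E)%E.
Proof.
move=> ab fE.
have cg : continuous (fun x : R => c0 + c1 * cos x + c2 * sin x).
  by move=> x; apply/differentiable_continuous/derivable1_diffP; apply: ex_derive.
split; first exact: (@mpiece f (fun x => c0 + c1 * cos x + c2 * sin x) a b fE cg).
have dG : forall x : R, is_derive x (1:R) (fun x => c0 * x + c1 * sin x - c2 * cos x)
   (c0 + c1 * cos x + c2 * sin x).
  by move=> x; apply: trigger_derive; rewrite /GRing.scale /=; ring.
rewrite (@piece f (fun x => c0 + c1 * cos x + c2 * sin x) _ a b b0 b1 ab dG cg fE).
by congr EFin; ring.
Qed.

Lemma outer_piece (f : R -> R) (A B C a b : R) (b0 b1 : bool) : a <= b ->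
  {in `]a, b[, forall x, f x = A * sin x + B * (sin x * cos x) + C * (sin x * sin x)} ->
  measurable_fun `]a, b[ (EFin \o f) /\
  (\int[mu]_(x in [set` Interval (BSide b0 a) (BSide b1 b)]) (f x)%:E
    = (A * (cos a - cos b) + B * (sin b * sin b - sin a * sin a) / 2
       + C * ((b - sin b * cos b) - (a - sin a * cos a)) / 2)%:E)%E.
Proof.
move=> ab fE.
have cg : continuous (fun x : R => A * sin x + B * (sin x * cos x) + C * (sin x * sin x)).
  by move=> x; apply/differentiable_continuous/derivable1_diffP; apply: ex_derive.
split; first exact: (@mpiece f (fun x => A * sin x + B * (sin x * cos x) + C * (sin x * sin x)) a b fE cg).
have dG : forall x : R, is_derive x (1:R) (fun x => - A * cos x + B * (sin x * sin x) / 2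
       + C * (x - sin x * cos x) / 2) (A * sin x + B * (sin x * cos x) + C * (sin x * sin x)).
  move=> x; apply: trigger_derive; rewrite /GRing.scale /=.
  have hc : cos x * cos x = 1 - sin x * sin x by rewrite -(cos2Dsin2 x); ring.
  by rewrite hc; field; rewrite ?pnatr_eq0.
rewrite (@piece f _ _ a b b0 b1 ab dG cg fE).
by congr EFin; field; rewrite ?pnatr_eq0.
Qed.
End S.

Section T.
Variable R : realType.
Local Notation mu := (@lebesgue_measure R).

Lemma q1 (x : R) : 0 < x < pi / 2 -> 0 < cos x /\ 0 < sin x.
Proof.
move=> /andP[h1 h2]; have := pi_gt0 R => hp.
split; [apply: cos_gt0_pihalf | apply: sin_gt0_pi]; apply/andP; split; lra.
Qed.

Lemma q2 (x : R) : pi / 2 < x < pi -> cos x < 0 /\ 0 < sin x.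
Proof.
move=> /andP[h1 h2]; have := pi_gt0 R => hp.
split; last by apply: sin_gt0_pi; apply/andP; split; lra.
have -> : cos x = - sin (x - pi / 2) by rewrite sinBpihalf opprK.
rewrite oppr_lt0; apply: sin_gt0_pi; apply/andP; split; lra.
Qed.

Lemma q3 (x : R) : pi < x < pi + pi / 2 -> cos x < 0 /\ sin x < 0.
Proof.
move=> /andP[h1 h2]; have := pi_gt0 R => hp.
have [] := @q1 (x - pi); first by apply/andP; split; lra.
move=> hc hs; have e : x = (x - pi) + pi by ring.
by rewrite e sinDpi cosDpi !oppr_lt0.
Qed.

Lemma q4 (x : R) : pi + pi / 2 < x < 2 * pi -> 0 < cos x /\ sin x < 0.
Proof.
move=> /andP[h1 h2]; have := pi_gt0 R => hp.
have [] := @q2 (x - pi); first by apply/andP; split; lra.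
move=> hc hs; have e : x = (x - pi) + pi by ring.
by rewrite e sinDpi cosDpi oppr_lt0 oppr_gt0.
Qed.

Lemma sin3pi2 : sin (pi + pi / 2) = - 1 :> R.
Proof. by rewrite addrC sinDpi sin_pihalf. Qed.
Lemma cos3pi2 : cos (pi + pi / 2) = 0 :> R.
Proof. by rewrite addrC cosDpi cos_pihalf oppr0. Qed.
Lemma sin2pi' : sin (2 * pi) = 0 :> R.
Proof. by rewrite mulr_natl sin2pi. Qed.
Lemma cos2pi' : cos (2 * pi) = 1 :> R.
Proof. by rewrite mulr_natl cos2pi. Qed.


Definition o0 : 'I_3 := @Ordinal 3 0 isT.
Definition o1 : 'I_3 := @Ordinal 3 1 isT.
Definition o2 : 'I_3 := @Ordinal 3 2 isT.

Lemma ord3P (P : 'I_3 -> Prop) : P o0 -> P o1 -> P o2 -> forall k, P k.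
Proof.
move=> h0 h1 h2 [[|[|[|k]]] hk].
- by rewrite (_ : Ordinal hk = o0) //; apply: val_inj.
- by rewrite (_ : Ordinal hk = o1) //; apply: val_inj.
- by rewrite (_ : Ordinal hk = o2) //; apply: val_inj.
- by [].
Qed.

Lemma sum3 (F : 'I_3 -> R) : \sum_(k < 3) F k = F o0 + F o1 + F o2.
Proof.
rewrite !big_ord_recl big_ord0 addr0 addrA.
have -> : (@lift 3 ord0 (@lift 2 ord0 ord0)) = o2 by apply: val_inj.
have -> : (@lift 3 ord0 ord0) = o1 by apply: val_inj.
have -> : (@ord0 2) = o0 by apply: val_inj.
by [].
Qed.

Definition sg3 (x y z : bool) : signs :=
  [ffun k : 'I_3 => if (k : nat) == 0%N then x else if (k : nat) == 1%N then y else z].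
Definition sg (l : vec3 R) : signs := [ffun k => 0 <= l 0 k].
Definition pm (b : bool) : R := if b then 1 else -1.

Lemma sum_signs (F : signs -> R) :
  \sum_(s : signs) F s = \sum_(x : bool) \sum_(y : bool) \sum_(z : bool) F (sg3 x y z).
Proof.
rewrite (reindex (fun t : bool * (bool * bool) => sg3 t.1 t.2.1 t.2.2)) /=; last first.
  exists (fun s : signs => (s o0, (s o1, s o2))) => [[x [y z]] _|s _].
    by rewrite /sg3 !ffunE.
  by apply/ffunP; apply: ord3P; rewrite /sg3 !ffunE.
under [RHS]eq_bigr do rewrite pair_big /=.
by rewrite pair_big /=.
Qed.
Lemma dot3E (u v : vec3 R) : dot3 u v = u 0 o0 * v 0 o0 + u 0 o1 * v 0 o1 + u 0 o2 * v 0 o2.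
Proof. by rewrite /dot3 sum3. Qed.

Lemma dot_sph (w : vec3 R) th ph : dot3 w (sph th ph) =
  w 0 o0 * (sin th * cos ph) + w 0 o1 * (sin th * sin ph) + w 0 o2 * cos th.
Proof. by rewrite dot3E /sph !mxE. Qed.

Lemma dot_vsgn (w : vec3 R) x y z : dot3 w (vsgn R (sg3 x y z)) =
  w 0 o0 * pm x + w 0 o1 * pm y + w 0 o2 * pm z.
Proof. by rewrite dot3E /vsgn !mxE /sg3 !ffunE. Qed.

Lemma sg_sph (th ph : R) : sg (sph th ph) =
  sg3 (0 <= sin th * cos ph) (0 <= sin th * sin ph) (0 <= cos th).
Proof. by apply/ffunP; apply: ord3P; rewrite /sg /sg3 !ffunE !mxE. Qed.

Lemma vlam_sg (l : vec3 R) : vlam l = vsgn R (sg l).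
Proof. by apply/rowP => k; rewrite !mxE /sg ffunE /sgn. Qed.


Section Int.
Variables (Q : signs -> R) (e : R) (w : vec3 R).
Definition gfun (l : vec3 R) : R := Q (sg l) * (e + dot3 w l).

Definition inner_formula (th : R) : R :=
  let bz := 0 <= cos th in let st := sin th in
  let c0 := (e + w 0 o2 * cos th) * st in
  let c1 := w 0 o0 * st * st in let c2 := w 0 o1 * st * st in
  Q (sg3 true true bz) * (c0 * (pi / 2) + c1 + c2)
  + Q (sg3 false true bz) * (c0 * (pi / 2) - c1 + c2)
  + Q (sg3 false false bz) * (c0 * (pi / 2) - c1 - c2)
  + Q (sg3 true false bz) * (c0 * (pi / 2) + c1 - c2).

Lemma pos_true (x : R) : 0 < x -> (0 <= x) = true.
Proof. by move=> h; apply/ltW. Qed.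
Lemma neg_false (x : R) : x < 0 -> (0 <= x) = false.
Proof. by move=> h; apply: lt_geF. Qed.

Lemma inner_val (th : R) : 0 < sin th ->
  Rintegral mu `[0, 2 * pi] (fun ph => gfun (sph th ph) * sin th) = inner_formula th.
Proof.
move=> hst; have hp := pi_gt0 R.
set f := fun ph => gfun (sph th ph) * sin th.
set bz := 0 <= cos th.
set c0 := (e + w 0 o2 * cos th) * sin th.
set c1 := w 0 o0 * sin th * sin th.
set c2 := w 0 o1 * sin th * sin th.
have fE : forall x, f x = Q (sg3 (0 <= sin th * cos x) (0 <= sin th * sin x) bz)
   * (c0 + c1 * cos x + c2 * sin x).
  by move=> x; rewrite /f /gfun sg_sph dot_sph /c0 /c1 /c2 /bz; ring.
set K1 := Q (sg3 true true bz).
set K2 := Q (sg3 false true bz).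
set K3 := Q (sg3 false false bz).
set K4 := Q (sg3 true false bz).
have E1 : {in `]0, pi / 2[, forall x, f x = K1 * c0 + K1 * c1 * cos x + K1 * c2 * sin x}.
  move=> x; rewrite in_itv/= => hx; have [hc hs] := q1 hx.
  rewrite fE !pos_true ?mulr_gt0//; rewrite /K1; ring.
have E2 : {in `]pi / 2, pi[, forall x, f x = K2 * c0 + K2 * c1 * cos x + K2 * c2 * sin x}.
  move=> x; rewrite in_itv/= => hx; have [hc hs] := q2 hx.
  rewrite fE (@pos_true (_ * sin x)) ?mulr_gt0// neg_false ?pmulr_rlt0//; rewrite /K2; ring.
have E3 : {in `]pi, pi + pi / 2[, forall x, f x = K3 * c0 + K3 * c1 * cos x + K3 * c2 * sin x}.
  move=> x; rewrite in_itv/= => hx; have [hc hs] := q3 hx.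
  rewrite fE !neg_false ?pmulr_rlt0//; rewrite /K3; ring.
have E4 : {in `]pi + pi / 2, 2 * pi[, forall x, f x = K4 * c0 + K4 * c1 * cos x + K4 * c2 * sin x}.
  move=> x; rewrite in_itv/= => hx; have [hc hs] := q4 hx.
  rewrite fE (@neg_false (_ * sin x)) ?pmulr_rlt0// pos_true ?mulr_gt0//; rewrite /K4; ring.
have h1 : (0 : R) <= pi / 2 by lra.
have h2 : pi / 2 <= pi :> R by lra.
have h3 : pi <= pi + pi / 2 :> R by lra.
have h4 : pi + pi / 2 <= 2 * pi :> R by lra.
have [m1 _] := @inner_piece R f _ _ _ _ _ true true h1 E1.
have [m2 _] := @inner_piece R f _ _ _ _ _ true true h2 E2.
have [m3 _] := @inner_piece R f _ _ _ _ _ true true h3 E3.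
have [m4 _] := @inner_piece R f _ _ _ _ _ true true h4 E4.
have mT : measurable_fun `[0, 2 * pi] (EFin \o f).
  apply: (meas_join (meas_oc m1)); apply: (meas_join (meas_oc m2)).
  exact: (meas_join (meas_oc m3) (meas_oc m4)).
rewrite /Rintegral.
rewrite (@split_int R f true 0 (pi + pi / 2) (2 * pi)) ?(le_trans h1 (le_trans h2 h3))//.
rewrite (@split_int R f true 0 pi (pi + pi / 2)) ?(le_trans h1 h2)//; last first.
  by apply: (meas_sub _ _ mT) => //.
rewrite (@split_int R f true 0 (pi / 2) pi)//; last first.
  by apply: (meas_sub _ _ mT) => //; lra.
rewrite (proj2 (@inner_piece R f _ _ _ _ _ true false h1 E1)).
rewrite (proj2 (@inner_piece R f _ _ _ _ _ false false h2 E2)).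
rewrite (proj2 (@inner_piece R f _ _ _ _ _ false false h3 E3)).
rewrite (proj2 (@inner_piece R f _ _ _ _ _ false false h4 E4)).
rewrite -!EFinD /=.
rewrite sin0 cos0 sin_pihalf cos_pihalf sinpi cospi sin3pi2 cos3pi2 sin2pi' cos2pi'.
rewrite /inner_formula -/bz -/c0 -/c1 -/c2 -/K1 -/K2 -/K3 -/K4.
by field; rewrite ?pnatr_eq0.
Qed.


Definition S0 (b : bool) := Q (sg3 true true b) + Q (sg3 false true b)
  + Q (sg3 false false b) + Q (sg3 true false b).
Definition T0 (b : bool) := (w 0 o0 + w 0 o1) * Q (sg3 true true b)
  + (- w 0 o0 + w 0 o1) * Q (sg3 false true b)
  + (- w 0 o0 - w 0 o1) * Q (sg3 false false b)
  + (w 0 o0 - w 0 o1) * Q (sg3 true false b).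

Lemma inner_formulaE th : inner_formula th =
  e * (pi / 2) * S0 (0 <= cos th) * sin th
  + w 0 o2 * (pi / 2) * S0 (0 <= cos th) * (sin th * cos th)
  + T0 (0 <= cos th) * (sin th * sin th).
Proof. by rewrite /inner_formula /S0 /T0; ring. Qed.

Lemma outer_val : sphere_int gfun =
  \sum_(s : signs) Q s * (e * (pi / 2) + dot3 w (vsgn R s) * (pi / 4)).
Proof.
have hp := pi_gt0 R.
rewrite /sphere_int.
set F := fun th => Rintegral mu `[0, 2 * pi] (fun ph => gfun (sph th ph) * sin th).
have E1 : {in `]0, pi / 2[, forall x, F x = (e * (pi / 2) * S0 true) * sin x
    + (w 0 o2 * (pi / 2) * S0 true) * (sin x * cos x) + T0 true * (sin x * sin x)}.
  move=> x; rewrite in_itv/= => hx; have [hc hs] := q1 hx.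
  by rewrite /F inner_val// inner_formulaE pos_true.
have E2 : {in `]pi / 2, pi[, forall x, F x = (e * (pi / 2) * S0 false) * sin x
    + (w 0 o2 * (pi / 2) * S0 false) * (sin x * cos x) + T0 false * (sin x * sin x)}.
  move=> x; rewrite in_itv/= => hx; have [hc hs] := q2 hx.
  by rewrite /F inner_val// inner_formulaE neg_false.
have h1 : (0 : R) <= pi / 2 by lra.
have h2 : pi / 2 <= pi :> R by lra.
have [m1 _] := @outer_piece R F _ _ _ _ _ true true h1 E1.
have [m2 _] := @outer_piece R F _ _ _ _ _ true true h2 E2.
have mT : measurable_fun `[0, pi] (EFin \o F).
  exact: (meas_join (meas_oc m1) (meas_oc m2)).
rewrite /Rintegral.
rewrite (@split_int R F true 0 (pi / 2) pi)//.
rewrite (proj2 (@outer_piece R F _ _ _ _ _ true false h1 E1)).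
rewrite (proj2 (@outer_piece R F _ _ _ _ _ false false h2 E2)).
rewrite -!EFinD /=.
rewrite sin0 cos0 sin_pihalf cos_pihalf sinpi cospi.
rewrite sum_signs !big_bool /= !dot_vsgn /S0 /T0 /pm.
by field; rewrite ?pnatr_eq0.
Qed.

End Int.
End T.

Section P.
Variable R : realType.

Lemma Theta_ge0 (x : R) : 0 <= Theta x.
Proof. by rewrite /Theta; case: ifP. Qed.

Lemma ThetaP (u v : R) : v = - u -> Theta u - Theta v = u.
Proof.
move=> ->; rewrite /Theta oppr_ge0.
by case: (leP 0 u) => h; case: (leP u 0) => h'; lra.
Qed.

Lemma ThetaS (u v : R) : v = - u -> Theta u + Theta v <= (u * u + 1) / 2.
Proof.
move=> ->; rewrite /Theta oppr_ge0.
have hs := sqr_ge0 (u - 1); have hs' := sqr_ge0 (u + 1).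
rewrite expr2 in hs; rewrite expr2 in hs'.
by case: (leP 0 u) => h; case: (leP u 0) => h'; nra.
Qed.

Lemma D1 (a : vec3 R) :
  \sum_(s : signs) Theta (dot3 a (vsgn R s)) *: vsgn R s = 4 *: a.
Proof.
apply/rowP; apply: ord3P; rewrite summxE !mxE sum_signs !big_bool /=.
all: rewrite !mxE !dot_vsgn /pm /sg3 !ffunE /=.
all: rewrite ?mulr1 ?mulrN1.
all: set x := a 0 o0; set y := a 0 o1; set z := a 0 o2.
all: have p1 := @ThetaP (x + y + z) (- x - y - z) (ltac:(ring)).
all: have p2 := @ThetaP (x + y - z) (- x - y + z) (ltac:(ring)).
all: have p3 := @ThetaP (x - y + z) (- x + y - z) (ltac:(ring)).
all: have p4 := @ThetaP (x - y - z) (- x + y + z) (ltac:(ring)).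
all: lra.
Qed.

Lemma D2 : \sum_(s : signs) vsgn R s = 0.
Proof.
apply/rowP; apply: ord3P; rewrite summxE !mxE sum_signs !big_bool /=.
all: by rewrite !mxE /sg3 !ffunE /=; lra.
Qed.

Lemma D3 (a : vec3 R) : dot3 a a = 1 ->
  \sum_(s : signs) Theta (dot3 a (vsgn R s)) <= 4.
Proof.
rewrite dot3E => ha.
rewrite sum_signs !big_bool /= !dot_vsgn /pm ?mulr1 ?mulrN1.
set x := a 0 o0 in ha *; set y := a 0 o1 in ha *; set z := a 0 o2 in ha *.
have p1 := @ThetaS (x + y + z) (- x - y - z) (ltac:(ring)).
have p2 := @ThetaS (x + y - z) (- x - y + z) (ltac:(ring)).
have p3 := @ThetaS (x - y + z) (- x + y - z) (ltac:(ring)).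
have p4 := @ThetaS (x - y - z) (- x + y + z) (ltac:(ring)).
have e : (x + y + z) * (x + y + z) + (x + y - z) * (x + y - z)
  + (x - y + z) * (x - y + z) + (x - y - z) * (x - y - z) = 4 by rewrite -ha; ring.
lra.
Qed.

Definition j0 : 'I_2 := @Ordinal 2 0 isT.
Definition j1 : 'I_2 := @Ordinal 2 1 isT.

Lemma ord2P (P : 'I_2 -> Prop) : P j0 -> P j1 -> forall k, P k.
Proof.
move=> h0 h1 [[|[|k]] hk].
- by rewrite (_ : Ordinal hk = j0) //; apply: val_inj.
- by rewrite (_ : Ordinal hk = j1) //; apply: val_inj.
- by [].
Qed.

Lemma sum3g (V : nmodType) (F : 'I_3 -> V) : \sum_(k < 3) F k = F o0 + F o1 + F o2.
Proof.
rewrite !big_ord_recl big_ord0 addr0 addrA.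
have -> : (@lift 3 ord0 (@lift 2 ord0 ord0)) = o2 by apply: val_inj.
have -> : (@lift 3 ord0 ord0) = o1 by apply: val_inj.
have -> : (@ord0 2) = o0 by apply: val_inj.
by [].
Qed.

Lemma complex_ext (x y : R[i]) : complex.Re x = complex.Re y ->
  complex.Im x = complex.Im y -> x = y.
Proof. by case: x => ? ?; case: y => ? ? /= -> ->. Qed.

Definition Mm (a : R) (u : vec3 R) : mat2 R := toC a *: I2 R + dotsigma u.

Ltac mment := rewrite /Mm /dotsigma !mxE summxE sum3g /pauli /=; rewrite !mxE /=;
  apply: complex_ext => /=; ring.

Lemma Mm00 a u : Mm a u j0 j0 = Complex (a + u 0 o2) 0.
Proof. mment. Qed.
Lemma Mm11 a u : Mm a u j1 j1 = Complex (a - u 0 o2) 0.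
Proof. mment. Qed.
Lemma Mm01 a u : Mm a u j0 j1 = Complex (u 0 o0) (- u 0 o1).
Proof. mment. Qed.
Lemma Mm10 a u : Mm a u j1 j0 = Complex (u 0 o0) (u 0 o1).
Proof. mment. Qed.

Lemma toCD (x y : R) : toC (x + y) = toC x + toC y.
Proof. by apply: complex_ext => /=; ring. Qed.
Lemma toCM (x y : R) : toC (x * y) = toC x * toC y.
Proof. by apply: complex_ext => /=; ring. Qed.
Lemma toC0 : toC (0 : R) = 0.
Proof. by apply: complex_ext. Qed.
Lemma toC1 : toC (1 : R) = 1.
Proof. by apply: complex_ext. Qed.
Lemma toC_sum (I : finType) (F : I -> R) : toC (\sum_(i : I) F i) = \sum_(i : I) toC (F i).
Proof. exact: (big_morph _ toCD toC0). Qed.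

Lemma dotsigmaD (u v : vec3 R) : dotsigma (u + v) = dotsigma u + dotsigma v.
Proof.
rewrite /dotsigma -big_split /=; apply: eq_bigr => k _.
by rewrite mxE toCD scalerDl.
Qed.
Lemma dotsigma0 : dotsigma (0 : vec3 R) = 0.
Proof.
rewrite /dotsigma big1 // => k _.
by rewrite mxE toC0 scale0r.
Qed.
Lemma dotsigmaZ (c : R) (u : vec3 R) : dotsigma (c *: u) = toC c *: dotsigma u.
Proof.
rewrite /dotsigma scaler_sumr; apply: eq_bigr => k _.
by rewrite mxE toCM scalerA.
Qed.
Lemma dotsigma_sum (I : finType) (F : I -> vec3 R) :
  dotsigma (\sum_(i : I) F i) = \sum_(i : I) dotsigma (F i).
Proof. exact: (big_morph _ dotsigmaD dotsigma0). Qed.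

Lemma MmZ (t a : R) (u : vec3 R) : toC t *: Mm a u = Mm (t * a) (t *: u).
Proof. by rewrite /Mm scalerDr scalerA toCM dotsigmaZ. Qed.

Lemma Mm_sum (I : finType) (a : I -> R) (u : I -> vec3 R) :
  \sum_(i : I) Mm (a i) (u i) = Mm (\sum_(i : I) a i) (\sum_(i : I) u i).
Proof.
rewrite /Mm big_split /= dotsigma_sum -scaler_suml toC_sum.
by [].
Qed.

Lemma Gs_Mm (s : signs) : Gs R s = Mm (1 / 8) ((1 / 16) *: vsgn R s).
Proof. by rewrite /Gs /Mm dotsigmaZ. Qed.

Lemma I2_Mm (l : vec3 R) : I2 R + dotsigma l = Mm 1 l.
Proof. by rewrite /Mm toC1 scale1r. Qed.

Lemma Mm_subI (a b : R) (u : vec3 R) : Mm a u - toC b *: I2 R = Mm (a - b) u.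
Proof.
rewrite /Mm toCD scalerDl.
rewrite (_ : toC (- b) = - toC b); last by apply: complex_ext => /=; ring.
by rewrite scaleNr; rewrite addrAC.
Qed.


Lemma Re_toCM (q : R) (z : R[i]) : complex.Re (toC q * z) = q * complex.Re z.
Proof. by case: z => x y /=; ring. Qed.
Lemma Im_toCM (q : R) (z : R[i]) : complex.Im (toC q * z) = q * complex.Im z.
Proof. by case: z => x y /=; ring. Qed.

Lemma entry_gen (Q : signs -> R) (r c : 'I_2) (ee fe : R) (ww fw : vec3 R) :
  (forall l, complex.Re (Mm 1 l r c) = ee + dot3 ww l) ->
  (forall l, complex.Im (Mm 1 l r c) = fe + dot3 fw l) ->
  sphere_int_mx (fun l => toC (Q (sg l)) *: (I2 R + dotsigma l)) r c =
  Complex (\sum_(s : signs) Q s * (ee * (pi / 2) + dot3 ww (vsgn R s) * (pi / 4)))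
          (\sum_(s : signs) Q s * (fe * (pi / 2) + dot3 fw (vsgn R s) * (pi / 4))).
Proof.
move=> hre him; rewrite /sphere_int_mx mxE.
transitivity (toC (sphere_int (gfun Q ee ww)) + iC R * toC (sphere_int (gfun Q fe fw))).
  congr (toC (sphere_int _) + iC R * toC (sphere_int _)).
    by apply: funext => l /=; rewrite I2_Mm mxE Re_toCM hre.
  by apply: funext => l /=; rewrite I2_Mm mxE Im_toCM him.
by rewrite !outer_val; apply: complex_ext => /=; ring.
Qed.

Definition ev (x y z : R) : vec3 R :=
  \row_(k < 3) (if (k : nat) == 0%N then x else if (k : nat) == 1%N then y else z).

Lemma dot_ev x y z (l : vec3 R) : dot3 (ev x y z) l = x * l 0 o0 + y * l 0 o1 + z * l 0 o2.
Proof. by rewrite dot3E /ev !mxE. Qed.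

Ltac sphtac := rewrite ?summxE !sum_signs !big_bool /= !dot_ev !mxE /sg3 !ffunE /=; ring.

Lemma sphere_Mm (Q : signs -> R) :
  sphere_int_mx (fun l => toC (Q (sg l)) *: (I2 R + dotsigma l)) =
  Mm (\sum_(s : signs) Q s * (pi / 2)) (\sum_(s : signs) (Q s * (pi / 4)) *: vsgn R s).
Proof.
apply/matrixP => r c; move: r c; apply: ord2P; apply: ord2P.
- rewrite (@entry_gen Q j0 j0 1 0 (ev 0 0 1) (ev 0 0 0)); first last.
  + by move=> l; rewrite Mm00 dot_ev /=; ring.
  + by move=> l; rewrite Mm00 dot_ev /=; ring.
  rewrite Mm00; apply: complex_ext => /=; sphtac.
- rewrite (@entry_gen Q j0 j1 0 0 (ev 1 0 0) (ev 0 (-1) 0)); first last.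
  + by move=> l; rewrite Mm01 dot_ev /=; ring.
  + by move=> l; rewrite Mm01 dot_ev /=; ring.
  rewrite Mm01; apply: complex_ext => /=; sphtac.
- rewrite (@entry_gen Q j1 j0 0 0 (ev 1 0 0) (ev 0 1 0)); first last.
  + by move=> l; rewrite Mm10 dot_ev /=; ring.
  + by move=> l; rewrite Mm10 dot_ev /=; ring.
  rewrite Mm10; apply: complex_ext => /=; sphtac.
- rewrite (@entry_gen Q j1 j1 1 0 (ev 0 0 (-1)) (ev 0 0 0)); first last.
  + by move=> l; rewrite Mm11 dot_ev /=; ring.
  + by move=> l; rewrite Mm11 dot_ev /=; ring.
  rewrite Mm11; apply: complex_ext => /=; sphtac.
Qed.

End P.

Section F.
Variable R : realType.

Lemma dot3C (u v : vec3 R) : dot3 u v = dot3 v u.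
Proof. by rewrite !dot3E; ring. Qed.

Lemma vlam_vsgn (s : signs) : vlam (vsgn R s) = vsgn R s.
Proof.
apply/rowP => k; rewrite !mxE /sgn.
by case: (s k); rewrite ?ler01 // oppr_ge0 ler10.
Qed.

Lemma sum_signs1 : \sum_(s : signs) (1 : R) = 8.
Proof. by rewrite sum_signs !big_bool /=; ring. Qed.

Lemma Ahalf_Mm n (p : 'I_n -> R) (a : 'I_n -> vec3 R) i :
  Ahalf p a i = Mm (p i / 2) ((p i / 4) *: a i).
Proof.
rewrite /Ahalf -dotsigmaZ I2_Mm MmZ mulr1 scalerA.
by congr Mm; congr (_ *: _); field.
Qed.

End F.

Lemma piq8g (R : realType) (q P : R) : P != 0 -> q / (4 * P) * (P / 2) = q * (1 / 8).
Proof. by move=> hP; field. Qed.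
Lemma piq16g (R : realType) (q P : R) : P != 0 -> q / (4 * P) * (P / 4) = 1 / 16 * q.
Proof. by move=> hP; field. Qed.

Theorem mainTheorem7 (R : realType) (n : nat) (p : 'I_n -> R)
  (a : 'I_n -> vec3 R)
  (hp : forall i, 0 <= p i)
  (ha : forall i, dot3 (a i) (a i) = 1)
  (hsum : \sum_(i < n) p i = 2)
  (hbal : \sum_(i < n) p i *: a i = 0)
  (hf : forall s : signs, fPOVM p a (vsgn R s) <= 1) :
  (forall i, 0 <= alpha p a i) /\
  (forall lam : vec3 R, dot3 lam lam = 1 ->
     (forall i, 0 <= pcond p a i lam) /\ \sum_(i < n) pcond p a i lam = 1) /\
  (forall i, sphere_int_mx
       (fun lam => toC (pcond p a i lam / (4 * pi)) *: (I2 R + dotsigma lam))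
     = Ahalf p a i) /\
  (forall i, \sum_(s : signs) toC (p i * Theta (dot3 (a i) (vsgn R s))) *: Gs R s
     = Ahalf p a i - toC (alpha p a i) *: I2 R).
Proof.
have F0 : forall i, \sum_(s : signs) Theta (dot3 (a i) (vsgn R s)) <= 4.
  by move=> i; exact: D3 (ha i).
have Ha : forall i, 0 <= alpha p a i.
  move=> i; rewrite /alpha; apply: mulr_ge0; first by apply: divr_ge0 => //.
  by have := F0 i; lra.
have KA : forall i, p i * \sum_(s : signs) Theta (dot3 (a i) (vsgn R s))
    = 4 * p i - 8 * alpha p a i.
  by move=> i; rewrite /alpha; field.
have fvs : forall s, fPOVM p a (vsgn R s)
    = \sum_(i < n) p i * Theta (dot3 (a i) (vsgn R s)).
  by move=> s; rewrite /fPOVM; apply: eq_bigr => i _; rewrite dot3C.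
set Sa := \sum_(j < n) alpha p a j.
have Sa0 : 0 <= Sa by apply: sumr_ge0 => j _; exact: Ha.
have SumF : \sum_(s : signs) fPOVM p a (vsgn R s) = 8 - 8 * Sa.
  under eq_bigr do rewrite fvs.
  rewrite exchange_big /=.
  under eq_bigr do rewrite -mulr_sumr KA.
  rewrite sumrB -!mulr_sumr hsum -/Sa; ring.
have SumFv : \sum_(s : signs) fPOVM p a (vsgn R s) *: vsgn R s = 0.
  under eq_bigr do rewrite fvs scaler_suml.
  rewrite exchange_big /=.
  under eq_bigr => i _ do under eq_bigr do rewrite -scalerA.
  under eq_bigr => i _ do rewrite -scaler_sumr D1 scalerA mulrC -scalerA.
  by rewrite -scaler_sumr hbal scaler0.
have Sa0case : Sa = 0 ->
    (forall i, alpha p a i = 0) /\ (forall s, fPOVM p a (vsgn R s) = 1).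
  move=> h; split.
    by move=> i; apply: (psumr_eq0P (P := predT) (fun j _ => Ha j) h).
  have h1 : \sum_(s : signs) (1 - fPOVM p a (vsgn R s)) = 0.
    by rewrite sumrB sum_signs1 SumF h; ring.
  have hnn : forall t : signs, predT t -> 0 <= 1 - fPOVM p a (vsgn R t).
    by move=> t _; rewrite subr_ge0.
  by move=> s; have := (psumr_eq0P hnn h1) s isT; lra.
split; first exact: Ha.
split.
  move=> lam _; rewrite /pcond vlam_sg -/Sa; set v := vsgn R (sg lam).
  split.
    move=> i; apply: addr_ge0; first by apply: mulr_ge0 => //; exact: Theta_ge0.
    case: eqP => // hS; apply: divr_ge0 => //; apply: mulr_ge0 => //.
    rewrite subr_ge0; exact: hf.
  rewrite big_split /=.
  rewrite (_ : \sum_(i < n) p i * Theta (dot3 (a i) v) = fPOVM p a v); last first.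
    by rewrite /fPOVM; apply: eq_bigr => i _; rewrite dot3C.
  have [hS|hS] := eqVneq Sa 0.
    by rewrite big1 // addr0 (Sa0case hS).2.
  rewrite (eq_bigr (fun i => ((1 - fPOVM p a v) / Sa) * alpha p a i)); last first.
    by move=> i _; rewrite mulrAC.
  by rewrite -mulr_sumr -/Sa; field.
have hpi : (pi : R) != 0 by rewrite gt_eqF // pi_gt0.
have piq8 : forall q : R, q / (4 * pi) * (pi / 2) = q * (1 / 8).
  by move=> q; apply: piq8g.
have piq16 : forall q : R, q / (4 * pi) * (pi / 4) = 1 / 16 * q.
  by move=> q; apply: piq16g.
split.
  move=> i.
  set Qp := fun s => pcond p a i (vsgn R s).
  rewrite (_ : (fun lam => toC (pcond p a i lam / (4 * pi)) *: (I2 R + dotsigma lam))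
     = (fun l => toC ((fun s => Qp s / (4 * pi)) (sg l)) *: (I2 R + dotsigma l))); last first.
    by apply: funext => l; rewrite /Qp /pcond vlam_vsgn vlam_sg.
  rewrite (sphere_Mm (fun s => Qp s / (4 * pi))) Ahalf_Mm.
  have QpE : forall s, Qp s = p i * Theta (dot3 (a i) (vsgn R s))
     + (if Sa == 0 then 0 else (1 - fPOVM p a (vsgn R s)) * alpha p a i / Sa).
    by move=> s; rewrite /Qp /pcond vlam_vsgn.
  have SQ : \sum_(s : signs) Qp s = 4 * p i.
    under eq_bigr do rewrite QpE.
    rewrite big_split /= -mulr_sumr KA.
    have [hS|hS] := eqVneq Sa 0.
      by rewrite big1 // ((Sa0case hS).1 i); ring.
    under eq_bigr do rewrite -mulrA.
    rewrite -mulr_suml sumrB sum_signs1 SumF -/Sa; by field.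
  have SQv : \sum_(s : signs) Qp s *: vsgn R s = (4 * p i) *: a i.
    under eq_bigr do rewrite QpE scalerDl.
    rewrite big_split /=.
    under eq_bigr do rewrite -scalerA.
    rewrite -scaler_sumr D1 scalerA.
    have [hS|hS] := eqVneq Sa 0.
      by rewrite big1 ?addr0 ?(mulrC 4) // => s _; rewrite scale0r.
    under eq_bigr do rewrite -mulrA mulrC -scalerA.
    rewrite -scaler_sumr.
    under eq_bigr do rewrite scalerBl scale1r.
    by rewrite sumrB D2 SumFv subr0 scaler0 addr0 mulrC.
  congr Mm.
    rewrite (eq_bigr (fun s => Qp s * (1 / 8))); last first.
      by move=> s _; rewrite piq8.
    by rewrite -mulr_suml SQ; field.
  rewrite (eq_bigr (fun s => (1 / 16) *: (Qp s *: vsgn R s))); last first.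
    by move=> s _; rewrite scalerA piq16.
  by rewrite -scaler_sumr SQv scalerA; congr (_ *: _); field.
move=> i.
under eq_bigr do rewrite Gs_Mm MmZ.
rewrite Mm_sum Ahalf_Mm Mm_subI.
congr Mm.
  by rewrite -mulr_suml -mulr_sumr KA; field.
have sc : forall (c d e : R) (v : vec3 R), (c * d) *: (e *: v) = (e * c) *: (d *: v).
  by move=> c d e v; rewrite !scalerA; congr (_ *: _); ring.
under eq_bigr do rewrite sc.
by rewrite -scaler_sumr D1 scalerA; congr (_ *: _); field.
Qed.
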